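(* The functions $\omega_\pm$ are smooth on $R\setminus\{p_0\}$, and as $(x,y)\to p_0=(2,0)$, $$\omega_\pm=\frac{(x-2)\pm\sqrt{(x-2)^2+32y^2}}{4}+O\big((x-2)^2+32y^2\big).$$ For $(x,y)\in R_+$ one has $0\le\omega_+(x,y)\le 2|y|$, and for $(x,y)\in R_-$ one has $-2|y|\le\omega_-(x,y)\le 0$. Moreover, for each wedge $V_a$ there is a constant $C>0$ such that $|\omega_\pm(x,y)|\ge C|y|$ for $(x,y)\in V_a$.
   Context: For $x>0$, $y\in\mathbb{R}$ let $r_1^2=4+x^2+4x^2y^2$, $\Delta=((x+2)^2+8x^2y^2)((x-2)^2+8x^2y^2)$ and $$\omega_\pm(x,y)=\frac{x^2-4\pm\sqrt{\Delta}}{2r_1^2}.$$ (These are the eigenvalues of the bottom $2\times2$ block of the $3\times3$ symmetric tridiagonal matrix with spectrum $\{-1,0,1\}$ having bidiagonal coordinates $(x,y)$.) Let $p_0=(2,0)$, $R=\{(x,y): x>0,\ 4-4y^2-x^2y^2-8x^2y^4\ge 0\}$, $R_+=R\cap((0,2]\times\mathbb{R})$, $R_-=R\cap([2,\infty)\times\mathbb{R})$. For $0<a\le 1/10$ the wedge of height $a$ is $V_a=\{(x,y): |y|\le a,\ |y|\ge|x-2|/10\}$. *)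

(* Defs.v *)
From HB Require Import structures.
From mathcomp Require Import all_boot all_order all_algebra.
From mathcomp Require Import all_classical all_reals topology normedtype derive.
Set Implicit Arguments. Unset Strict Implicit. Unset Printing Implicit Defensive.
Import Order.TTheory GRing.Theory Num.Theory.
Import numFieldNormedType.Exports.
Local Open Scope classical_set_scope.
Local Open Scope ring_scope.

Section Defs.
Variable R : realType.

Definition r1sq (x y : R) : R := 4 + x ^+ 2 + 4 * x ^+ 2 * y ^+ 2.

Definition Delta (x y : R) : R :=
  ((x + 2) ^+ 2 + 8 * x ^+ 2 * y ^+ 2) * ((x - 2) ^+ 2 + 8 * x ^+ 2 * y ^+ 2).

Definition omega_p (x y : R) : R := (x ^+ 2 - 4 + Num.sqrt (Delta x y)) / (2 * r1sq x y).
Definition omega_m (x y : R) : R := (x ^+ 2 - 4 - Num.sqrt (Delta x y)) / (2 * r1sq x y).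

Definition omega_p2 (p : R * R) : R := omega_p p.1 p.2.
Definition omega_m2 (p : R * R) : R := omega_m p.1 p.2.

Definition p0 : R * R := (2, 0).

Definition regionR : set (R * R) :=
  [set p | 0 < p.1 /\ 0 <= 4 - 4 * p.2 ^+ 2 - p.1 ^+ 2 * p.2 ^+ 2 - 8 * p.1 ^+ 2 * p.2 ^+ 4].
Definition regionRp : set (R * R) := [set p | regionR p /\ p.1 <= 2].
Definition regionRm : set (R * R) := [set p | regionR p /\ 2 <= p.1].

Definition wedge (a : R) : set (R * R) :=
  [set p | `|p.2| <= a /\ `|p.1 - 2| / 10 <= `|p.2|].

Fixpoint smooth_n (U : set (R * R)) (f : R * R -> R) (n : nat) : Prop :=
  (forall p, U p -> {for p, continuous f}) /\
  match n with
  | 0 => True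
  | n'.+1 => forall v : R * R,
      (forall p, U p -> derivable f p v) /\ smooth_n U ('D_v f) n'
  end.

Definition smooth_on (U : set (R * R)) (f : R * R -> R) : Prop :=
  open U /\ forall n, smooth_n U f n.

End Defs.

(* Main.v *)
Require Import Defs.
From HB Require Import structures.
From mathcomp Require Import all_boot all_order all_algebra.
From mathcomp Require Import all_classical all_reals topology normedtype derive realfun.
From mathcomp Require Import ring lra.
Import Order.TTheory GRing.Theory Num.Theory.
Import numFieldNormedType.Exports.
Local Open Scope classical_set_scope.
Local Open Scope ring_scope.
Section S.
Variable R : realType.
Definition fstR (p : R * R) : R := p.1.
Definition sndR (p : R * R) : R := p.2.
Lemma fstR_lin : linear fstR. Proof. by move=> a u v. Qed.
HB.instance Definition _ := GRing.isLinear.Build R (R*R)%type R *:%R fstR fstR_lin.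
Lemma sndR_lin : linear sndR. Proof. by move=> a u v. Qed.
HB.instance Definition _ := GRing.isLinear.Build R (R*R)%type R *:%R sndR sndR_lin.
Lemma dfst (p : R*R) : differentiable fstR p.
Proof. apply: linear_differentiable => q; exact: cvg_fst. Qed.
Lemma dsnd (p : R*R) : differentiable sndR p.
Proof. apply: linear_differentiable => q; exact: cvg_snd. Qed.
Inductive ex := Cst of R | EX | EY | Add of ex & ex | Mul of ex & ex | Inv of ex | Sqrt of ex.
Fixpoint ev (e : ex) (p : R*R) : R := match e with
  | Cst c => c | EX => p.1 | EY => p.2 | Add a b => ev a p + ev b p
  | Mul a b => ev a p * ev b p | Inv a => (ev a p)^-1 | Sqrt a => Num.sqrt (ev a p) end.
Fixpoint gd (e : ex) (p : R*R) : Prop := match e with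
  | Add a b | Mul a b => gd a p /\ gd b p
  | Inv a => gd a p /\ ev a p != 0
  | Sqrt a => gd a p /\ 0 < ev a p
  | _ => True end.
Fixpoint dv (v : R*R) e := match e with
  | Cst _ => Cst 0 | EX => Cst v.1 | EY => Cst v.2
  | Add a b => Add (dv v a) (dv v b)
  | Mul a b => Add (Mul (dv v a) b) (Mul a (dv v b))
  | Inv a => Mul (Cst (-1)) (Mul (dv v a) (Inv (Mul a a)))
  | Sqrt a => Mul (dv v a) (Inv (Mul (Cst 2) (Sqrt a))) end.

Lemma ev_diff e p : gd e p -> differentiable (ev e) p.
Proof.
elim: e => [c|||a IHa b IHb|a IHa b IHb|a IHa|a IHa] /=.
- by move=> _; exact: differentiable_cst.
- by move=> _; exact: dfst.
- by move=> _; exact: dsnd.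
- by case=> /IHa da /IHb db; exact: differentiableD.
- by case=> /IHa da /IHb db; exact: differentiableM.
- by case=> /IHa da an0; exact: differentiableV.
- case=> /IHa da ap; apply: differentiable_comp => //.
  apply/derivable1_diffP; have [] := is_derive1_sqrt ap; by [].
Qed.

Lemma gd_dv e p v : gd e p -> gd (dv v e) p.
Proof.
elim: e => [c|||a IHa b IHb|a IHa b IHb|a IHa|a IHa] //=.
- by case=> /IHa da /IHb db.
- by case=> ga gb; split; split => //; [exact: IHa | exact: IHb].
- case=> ga an0; split => //; split; first exact: IHa.
  by split => //; rewrite mulf_neq0.
- case=> ga ap; split; first exact: IHa.
  split => //; rewrite mulf_neq0 //; by rewrite gt_eqF // sqrtr_gt0.
Qed.

Lemma ev_D e p v : gd e p -> 'D_v (ev e) p = ev (dv v e) p.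
Proof.
elim: e => [c|||a IHa b IHb|a IHa b IHb|a IHa|a IHa] /=.
- by move=> _; exact: derive_cst.
- move=> _; change (fun q : R*R => q.1) with fstR.
  rewrite deriveE; last exact: dfst.
  by rewrite diff_lin //; move=> q; exact: cvg_fst.
- move=> _; change (fun q : R*R => q.2) with sndR.
  rewrite deriveE; last exact: dsnd.
  by rewrite diff_lin //; move=> q; exact: cvg_snd.
- case=> ga gb; rewrite deriveD ?IHa ?IHb //; by apply: diff_derivable; exact: ev_diff.
- case=> ga gb; rewrite deriveM ?IHa ?IHb //; last 2 first.
    by apply: diff_derivable; exact: ev_diff.
  by apply: diff_derivable; exact: ev_diff.
  rewrite /GRing.scale /=; ring.
- case=> ga an0; rewrite deriveV ?IHa //; last by apply: diff_derivable; exact: ev_diff.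
  by rewrite /GRing.scale /= expr2; ring.
- case=> ga ap.
  have dsq : differentiable (@Num.sqrt R) (ev a p).
    apply/derivable1_diffP; have [] := is_derive1_sqrt ap; by [].
  rewrite (_ : (fun q => Num.sqrt (ev a q)) = Num.sqrt \o ev a) //.
  rewrite deriveE; last by apply: differentiable_comp => //; exact: ev_diff.
  rewrite diff_comp //; last exact: ev_diff.
  rewrite /= deriv1E; last exact/derivable1_diffP.
  rewrite -deriveE; last exact: ev_diff.
  by rewrite IHa // derive1E derive_sqrt.
Qed.
Lemma gd_near e p : gd e p -> \forall q \near p, gd e q.
Proof.
elim: e => [c|||a IHa b IHb|a IHa b IHb|a IHa|a IHa] /=.
- by move=> _; near=> q.
- by move=> _; near=> q.
- by move=> _; near=> q.
- case=> /IHa na /IHb nb; near=> q; split; near: q; [exact: na|exact: nb].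
- case=> /IHa na /IHb nb; near=> q; split; near: q; [exact: na|exact: nb].
- case=> ga an0; have na := IHa ga.
  have nz : \forall q \near p, ev a q != 0.
    have := differentiable_continuous (ev_diff _ _ ga).
    by move/cvgr_neq0 => /(_ an0).
  near=> q; split; near: q; [exact: na|exact: nz].
- case=> ga ap; have na := IHa ga.
  have nz : \forall q \near p, 0 < ev a q.
    have := differentiable_continuous (ev_diff _ _ ga).
    by move/cvgr_gt => /(_ 0 ap).
  near=> q; split; near: q; [exact: na|exact: nz].
Unshelve. all: by end_near.
Qed.

Lemma smooth_ev (U : set (R*R)) n : open U -> forall (e : ex) (f : R*R -> R),
  (forall p, U p -> gd e p) -> (forall p, U p -> f p = ev e p) -> smooth_n U f n.
Proof.
move=> oU; elim: n => [|n IH] e f ge fe.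
- split => // p Up.
  have nU : \forall q \near p, U q by move: oU; rewrite openE => /(_ p Up).
  have nf : \forall q \near p, ev e q = f q.
    by apply: filterS nU => q Uq; rewrite fe.
  rewrite /prop_for /continuous_at /= (fe p Up).
  exact: cvg_trans (near_eq_cvg nf) (differentiable_continuous (ev_diff _ _ (ge p Up))).
- split.
    move=> p Up.
    have nU : \forall q \near p, U q by move: oU; rewrite openE => /(_ p Up).
    have nf : \forall q \near p, ev e q = f q.
      by apply: filterS nU => q Uq; rewrite fe.
    rewrite /prop_for /continuous_at /= (fe p Up).
    exact: cvg_trans (near_eq_cvg nf) (differentiable_continuous (ev_diff _ _ (ge p Up))).
  move=> v; split.
    move=> p Up.
    have nU : \forall q \near p, U q by move: oU; rewrite openE => /(_ p Up).
    have nf : \forall q \near p, ev e q = f q.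
      by apply: filterS nU => q Uq; rewrite fe.
    apply: near_eq_derivable nf _; apply: diff_derivable; exact: (ev_diff _ _ (ge p Up)).
  apply: (IH (dv v e)).
    by move=> p Up; apply: gd_dv; exact: ge.
  move=> p Up.
  have nU : \forall q \near p, U q by move: oU; rewrite openE => /(_ p Up).
  have nf : \forall q \near p, f q = ev e q.
    by apply: filterS nU => q Uq; rewrite fe.
  by rewrite (near_eq_derive _ nf) ev_D //; exact: (ge p Up).
Qed.
Definition sq a := Mul a a.
Definition eD := Mul (Add (sq (Add EX (Cst 2))) (Mul (Cst 8) (Mul (sq EX) (sq EY))))
                     (Add (sq (Add EX (Cst (-2)))) (Mul (Cst 8) (Mul (sq EX) (sq EY)))).
Definition eR := Add (Add (Cst 4) (sq EX)) (Mul (Cst 4) (Mul (sq EX) (sq EY))).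
Definition eOp := Mul (Add (Add (sq EX) (Cst (-4))) (Sqrt eD)) (Inv (Mul (Cst 2) eR)).
Definition eOm := Mul (Add (Add (sq EX) (Cst (-4))) (Mul (Cst (-1)) (Sqrt eD))) (Inv (Mul (Cst 2) eR)).
Lemma evD p : ev eD p = Delta p.1 p.2. Proof. rewrite /Delta /=; ring. Qed.
Lemma evR p : ev eR p = r1sq p.1 p.2. Proof. rewrite /r1sq /=; ring. Qed.
Lemma r1sq_gt0 x y : 0 < r1sq x y :> R.
Proof. rewrite /r1sq; nra. Qed.
Lemma evOp p : omega_p2 p = ev eOp p.
Proof. rewrite /omega_p2 /omega_p -evD -evR /= expr2; ring. Qed.
Lemma evOm p : omega_m2 p = ev eOm p.
Proof. rewrite /omega_m2 /omega_m -evD -evR /= expr2; ring. Qed.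
Definition UD : set (R*R) := [set p | 0 < Delta p.1 p.2].
Lemma gdOp p : UD p -> gd eOp p.
Proof.
move=> Up; have hD : 0 < ev eD p by rewrite evD.
have hR : 2 * ev eR p != 0 by rewrite evR mulf_neq0 // gt_eqF // r1sq_gt0.
by do ! split => //.
Qed.
Lemma gdOm p : UD p -> gd eOm p.
Proof.
move=> Up; have hD : 0 < ev eD p by rewrite evD.
have hR : 2 * ev eR p != 0 by rewrite evR mulf_neq0 // gt_eqF // r1sq_gt0.
by do ! split => //.
Qed.
Lemma openUD : open UD.
Proof.
rewrite openE => p Up.
have : gd (Sqrt eD) p by split; [do ! split | rewrite evD].
move/gd_near; apply: filterS => q [_]; by rewrite evD.
Qed.
Lemma part1 : exists U : set (R * R),
      (@regionR R `\ @p0 R `<=` U) /\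
      smooth_on U (@omega_p2 R) /\ smooth_on U (@omega_m2 R).
Proof.
exists UD; split; last first.
  split; split => [|n]; try exact: openUD.
  - apply: (@smooth_ev UD n openUD eOp); [exact: gdOp | by move=> p _; exact: evOp].
  - apply: (@smooth_ev UD n openUD eOm); [exact: gdOm | by move=> p _; exact: evOm].
case=> x y [[/= x0 _] np0]; rewrite /UD /Delta /=.
have hA : 0 < (x + 2) ^+ 2 + 8 * x ^+ 2 * y ^+ 2 by nra.
apply: mulr_gt0 => //.
have [x2|x2] := eqVneq x 2.
  have y0 : y != 0 by apply/eqP => y0; apply: np0; rewrite x2 y0.
  have : 0 < y ^+ 2 by rewrite lt_neqAle sqr_ge0 andbT eq_sym sqrf_eq0.
  rewrite x2; nra.
have : (x - 2) ^+ 2 > 0 by rewrite lt_neqAle sqr_ge0 andbT eq_sym sqrf_eq0 subr_eq0.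
nra.
Qed.

Lemma prelim (x y q : R) : 0 < x -> (x-2)^+2 + y^+2 < 1/100 -> 0 <= q ->
  q^+2 = (x-2)^+2 + 32 * y^+2 ->
  [/\ -1/10 < x-2 < 1/10, q <= 1, - q <= x-2 <= q, q^+2 <= q
    & x^+2 * y^+2 <= 441/100 * y^+2].
Proof.
move=> x0 hd q0 q2.
have hy := sqr_ge0 y; have hz := sqr_ge0 (x-2).
have H0 : (x-2)^+2 < 1/100 by lra.
have H2 : y^+2 < 1/100 by lra.
have H1 : -1/10 < x-2 < 1/10 by apply/andP; split; nra.
have H3 : q <= 1 by clear -q0 q2 H0 H2; nra.
have H4 : - q <= x-2 <= q by clear -q0 q2 hy; apply/andP; split; nra.
have Hq2 : q^+2 <= q by clear -q0 H3; nra.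
have Hx2 : x^+2 <= 441/100 by clear -H1; nra.
split => //.
have : 0 <= (441/100 - x^+2) * y^+2 by apply: mulr_ge0; lra.
clear -Hx2; nra.
Qed.

Lemma la (x y q : R) : -1/10 < x-2 < 1/10 -> - q <= x-2 <= q -> q^+2 <= q ->
  q^+2 = (x-2)^+2 + 32 * y^+2 -> x^+2 * y^+2 <= 441/100 * y^+2 ->
  -(11*q) <= (x-2)*(x+6) + 8*x^+2*y^+2 <= 11*q.
Proof.
move=> /andP[H1a H1b] /andP[H4a H4b] Hq2 q2 Hxy.
have hy := sqr_ge0 y.
have q0 : 0 <= q by lra.
have p1 : 0 <= (q - (x-2)) * (x+6) by apply: mulr_ge0; lra.
have p2 : 0 <= (q + (x-2)) * (x+6) by apply: mulr_ge0; lra.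
have p3 : 0 <= q * (81/10 - (x+6)) by apply: mulr_ge0; lra.
have h1 : -(9*q) <= (x-2)*(x+6) <= 9*q by apply/andP; split; lra.
have hxy0 := mulr_ge0 (sqr_ge0 x) hy.
have h2 : 0 <= 8*x^+2*y^+2 <= 2*q by have hz := sqr_ge0 (x-2); apply/andP; split; lra.
lra.
Qed.

Lemma lb (x y q : R) : -1/10 < x-2 < 1/10 -> - q <= x-2 <= q ->
  q^+2 = (x-2)^+2 + 32 * y^+2 ->
  -(2*q^+3) <= 8*y^+2*(x-2)*(x+2) <= 2*q^+3.
Proof.
move=> /andP[H1a H1b] /andP[H4a H4b] q2.
have hy := sqr_ge0 y; have hz := sqr_ge0 (x-2).
have q0 : 0 <= q by lra.
set c := 8*y^+2*(x+2).
have pc : 0 <= y^+2 * (41/10 - (x+2)) by apply: mulr_ge0; lra.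
have pc2 : 0 <= y^+2 * (x+2) by apply: mulr_ge0; lra.
have Hc : 0 <= c <= 2*q^+2 by rewrite /c; apply/andP; split; lra.
have -> : 8*y^+2*(x-2)*(x+2) = c * (x-2) by rewrite /c; ring.
have p1 : 0 <= c * (q - (x-2)) by apply: mulr_ge0; lra.
have p2 : 0 <= c * (q + (x-2)) by apply: mulr_ge0; lra.
have p3 : 0 <= q * (2*q^+2 - c) by apply: mulr_ge0; lra.
have e : q * q^+2 = q^+3 by ring.
apply/andP; split; lra.
Qed.

Lemma lD (a b q : R) : 0 <= q -> q <= 1 -> -(11*q) <= a <= 11*q ->
  -(2*q^+3) <= b <= 2*q^+3 ->
  -(65*q^+3) <= 16 * b + a * q^+2 + a * b <= 65*q^+3.
Proof.
move=> q0 q1 /andP[Ha1 Ha2] /andP[Hb1 Hb2].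
have Hq4 : q^+4 <= q^+3.
  have := mulr_ge0 (exprn_ge0 3 q0) (_ : 0 <= 1 - q); rewrite subr_ge0 => /(_ q1).
  have -> : q^+4 = q^+3 * q by ring.
  lra.
have p1 : 0 <= (11*q - a) * q^+2 by apply: mulr_ge0; [lra|exact: sqr_ge0].
have p2 : 0 <= (11*q + a) * q^+2 by apply: mulr_ge0; [lra|exact: sqr_ge0].
have p3 : 0 <= (11*q - a) * (2*q^+3 - b) by apply: mulr_ge0; lra.
have p4 : 0 <= (11*q + a) * (2*q^+3 + b) by apply: mulr_ge0; lra.
have p5 : 0 <= (11*q - a) * (2*q^+3 + b) by apply: mulr_ge0; lra.
have p6 : 0 <= (11*q + a) * (2*q^+3 - b) by apply: mulr_ge0; lra.
have e1 : q * q^+2 = q^+3 by ring.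
have e2 : q * q^+3 = q^+4 by ring.
apply/andP; split; lra.
Qed.

Lemma lS (s q : R) : 0 <= s -> 0 <= q ->
  -(65*q^+3) <= s^+2 - 16 * q^+2 <= 65*q^+3 ->
  -(17 * q^+2) <= s - 4 * q <= 17 * q^+2.
Proof.
move=> s0 q0 /andP[D1 D2].
have [q00|qp] := eqVneq q 0.
  move: D2; rewrite q00 => D2.
  have s00 : s = 0 by apply/eqP; rewrite -sqrf_eq0 eq_le sqr_ge0 andbT; lra.
  rewrite s00; lra.
have qp' : 0 < q by rewrite lt_neqAle eq_sym qp.
have q3 : 0 < q^+3 by rewrite exprn_gt0.
have sq : 0 < s + 4*q by lra.
have sq2 : 0 <= q^+2 * s by rewrite mulr_ge0 // sqr_ge0.
have e1 : q^+2 * q = q^+3 by ring.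
apply/andP; split; rewrite leNgt; apply/negP => h.
  have := mulr_gt0 (_ : 0 < -(17*q^+2) - (s - 4*q)) sq.
  move/(_ ltac:(lra)); lra.
have := mulr_gt0 (_ : 0 < (s - 4*q) - 17*q^+2) sq.
move/(_ ltac:(lra)); lra.
Qed.

Lemma core (x y s q : R) : 0 < x -> (x-2)^+2 + y^+2 < 1/100 -> 0 <= s ->
  s^+2 = Delta x y -> 0 <= q -> q^+2 = (x-2)^+2 + 32 * y^+2 ->
  -(17 * q^+2) <= s - 4 * q <= 17 * q^+2.
Proof.
move=> x0 hd s0 s2 q0 q2.
have [H1 H3 H4 Hq2 Hxy] := @prelim x y q x0 hd q0 q2.
apply: lS => //.
have -> : s^+2 - 16 * q^+2 = 16 * (8*y^+2*(x-2)*(x+2)) +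
   ((x-2)*(x+6) + 8*x^+2*y^+2) * q^+2 +
   ((x-2)*(x+6) + 8*x^+2*y^+2) * (8*y^+2*(x-2)*(x+2)).
  by rewrite s2 q2 /Delta; ring.
apply: lD => //; [exact: la | exact: lb].
Qed.

Lemma lT1 (x y q : R) : -1/10 < x-2 < 1/10 -> q^+2 = (x-2)^+2 + 32 * y^+2 ->
  x^+2 * y^+2 <= 441/100 * y^+2 ->
  -(3*q^+2) <= - x * (x-2)^+2 - 4 * x^+2 * y^+2 * (x-2) <= 3 * q^+2.
Proof.
move=> /andP[H1a H1b] q2 Hxy.
have hy := sqr_ge0 y; have hz := sqr_ge0 (x-2).
have hxy0 := mulr_ge0 (sqr_ge0 x) hy.
have p1 : 0 <= (21/10 - x) * (x-2)^+2 by apply: mulr_ge0; lra.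
have p2 : 0 <= x^+2*y^+2 * (1/10 - (x-2)) by apply: mulr_ge0; lra.
have p3 : 0 <= x^+2*y^+2 * (1/10 + (x-2)) by apply: mulr_ge0; lra.
have p4 : 0 <= x * (x-2)^+2 by apply: mulr_ge0; lra.
apply/andP; split; lra.
Qed.

Lemma lW (x y q : R) : -1/10 < x-2 < 1/10 -> - q <= x-2 <= q -> q <= 1 ->
  q^+2 = (x-2)^+2 + 32 * y^+2 -> x^+2 * y^+2 <= 441/100 * y^+2 ->
  -(5*q^+2) <= (x-2)*(x+2)*q + 4*x^+2*y^+2*q <= 5 * q^+2.
Proof.
move=> /andP[H1a H1b] /andP[H4a H4b] H3 q2 Hxy.
have hy := sqr_ge0 y; have hz := sqr_ge0 (x-2).
have q0 : 0 <= q by lra.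
have hxy0 := mulr_ge0 (sqr_ge0 x) hy.
have xq : 0 <= (x+2) * q by apply: mulr_ge0; lra.
have p1 : 0 <= (q - (x-2)) * ((x+2) * q) by apply: mulr_ge0; lra.
have p2 : 0 <= (q + (x-2)) * ((x+2) * q) by apply: mulr_ge0; lra.
have p3 : 0 <= q * q * (41/10 - (x+2)) by apply: mulr_ge0; [apply: mulr_ge0|]; lra.
have p4 : 0 <= x^+2*y^+2 * q by apply: mulr_ge0.
have p5 : 0 <= (441/100 * y^+2 - x^+2*y^+2) * q by apply: mulr_ge0; lra.
have p6 : 0 <= y^+2 * (1 - q) by apply: mulr_ge0; lra.
have e1 : (x - 2) * (x + 2) * q = (x-2) * ((x+2) * q) by ring.
have e2 : q * q = q^+2 by ring.
apply/andP; split; lra.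
Qed.

Lemma lfin (E r q : R) : 4 <= r -> -(42*q^+2) <= E <= 42 * q^+2 ->
  `|E / (4 * r)| <= 3 * q^+2.
Proof.
move=> r4 /andP[E1 E2].
have hq2 := sqr_ge0 q.
have r0 : 0 < r by lra.
have pr : 0 <= (r - 4) * q^+2 by apply: mulr_ge0; lra.
rewrite ler_norml; apply/andP; split.
  by rewrite ler_pdivlMr ?mulr_gt0 //; lra.
by rewrite ler_pdivrMr ?mulr_gt0 //; lra.
Qed.

Lemma r1sq_ge4 (x y : R) : 4 <= r1sq x y.
Proof.
rewrite /r1sq; have := sqr_ge0 x; have := mulr_ge0 (sqr_ge0 x) (sqr_ge0 y).
lra.
Qed.

Lemma asym (x y s q : R) : 0 < x -> (x-2)^+2 + y^+2 < 1/100 -> 0 <= s ->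
  s^+2 = Delta x y -> 0 <= q -> q^+2 = (x-2)^+2 + 32 * y^+2 ->
  `|(x ^+ 2 - 4 + s) / (2 * r1sq x y) - ((x - 2) + q) / 4| <= 3 * q^+2 /\
  `|(x ^+ 2 - 4 - s) / (2 * r1sq x y) - ((x - 2) - q) / 4| <= 3 * q^+2.
Proof.
move=> x0 hd s0 s2 q0 q2.
have /andP[K1 K2] := @core x y s q x0 hd s0 s2 q0 q2.
have [H1 H3 H4 Hq2 Hxy] := @prelim x y q x0 hd q0 q2.
have /andP[T1a T1b] := @lT1 x y q H1 q2 Hxy.
have /andP[Wa Wb] := @lW x y q H1 H4 H3 q2 Hxy.
have r4 := r1sq_ge4 x y.
have rn0 : r1sq x y != 0 by apply/eqP => h; move: r4; rewrite h; lra.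
split.
  have -> : (x ^+ 2 - 4 + s) / (2 * r1sq x y) - (x - 2 + q) / 4 =
     ((- x * (x-2)^+2 - 4 * x^+2 * y^+2 * (x-2)) + 2 * (s - 4 * q)
       - ((x-2)*(x+2)*q + 4*x^+2*y^+2*q)) / (4 * r1sq x y).
    move: rn0; rewrite /r1sq => rn0; field; lra.
  apply: lfin => //; apply/andP; split; lra.
have -> : (x ^+ 2 - 4 - s) / (2 * r1sq x y) - (x - 2 - q) / 4 =
   ((- x * (x-2)^+2 - 4 * x^+2 * y^+2 * (x-2)) - 2 * (s - 4 * q)
     + ((x-2)*(x+2)*q + 4*x^+2*y^+2*q)) / (4 * r1sq x y).
  move: rn0; rewrite /r1sq => rn0; field; lra.
apply: lfin => //; apply/andP; split; lra.
Qed.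

Lemma DeltaE (x y : R) : Delta x y =
  (x^+2 - 4)^+2 + (8 * x^+2 * y^+2 * (2 * x^+2 + 8) + 64 * (x^+2 * y^+2)^+2).
Proof. rewrite /Delta; ring. Qed.

Lemma Delta_ge0 (x y : R) : 0 <= Delta x y.
Proof.
rewrite /Delta; apply: mulr_ge0; apply: addr_ge0; rewrite ?sqr_ge0 //;
  rewrite mulr_ge0 ?sqr_ge0 // mulr_ge0 ?sqr_ge0 //.
Qed.

Lemma Drest_ge0 (x y : R) : 0 <= 8 * x^+2 * y^+2 * (2 * x^+2 + 8) + 64 * (x^+2 * y^+2)^+2.
Proof.
have h1 := mulr_ge0 (sqr_ge0 x) (sqr_ge0 y).
have h2 := sqr_ge0 (x^+2 * y^+2).
have h3 : 0 <= 2 * x^+2 + 8 by have := sqr_ge0 x; lra.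
have := mulr_ge0 h1 h3.
have -> : 8 * x ^+ 2 * y ^+ 2 * (2 * x ^+ 2 + 8) = 8 * (x ^+ 2 * y ^+ 2 * (2 * x ^+ 2 + 8)) by ring.
lra.
Qed.

Lemma sqrtD_ge (x y : R) : `|x^+2 - 4| <= Num.sqrt (Delta x y).
Proof.
rewrite -sqrtr_sqr; apply: ler_wsqrtr; rewrite DeltaE.
have := Drest_ge0 x y; lra.
Qed.

Lemma sqrtD_le (x y e : R) : 0 <= e -> e^+2 = (x^+2 - 4)^+2 ->
  Num.sqrt (Delta x y) <= 4 * `|y| * r1sq x y + e.
Proof.
move=> e0 e2.
set w := `|y|.
have w0 : 0 <= w by rewrite /w normr_ge0.
have hy2 : y^+2 = w^+2 by rewrite /w real_normK // num_real.
have r4 := r1sq_ge4 x y.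
have T0 : 0 <= 4 * w * r1sq x y + e.
  have := mulr_ge0 w0 (_ : 0 <= r1sq x y); move/(_ ltac:(lra)); lra.
rewrite -(ger0_norm T0) -sqrtr_sqr; apply: ler_wsqrtr.
have key : (4 * w * r1sq x y + e)^+2 - Delta x y =
   16 * (w^+2 * (16 + 4 * x^+2 + 32 * x^+2 * w^+2 + 4 * (x^+2)^+2 * w^+2
      + 16 * (x^+2)^+2 * (w^+2)^+2)) + 8 * (w * r1sq x y * e) + (e^+2 - (x^+2 - 4)^+2).
  rewrite /Delta /r1sq hy2; ring.
rewrite e2 subrr addr0 in key.
have p1 : 0 <= 16 + 4 * x^+2 + 32 * x^+2 * w^+2 + 4 * (x^+2)^+2 * w^+2
      + 16 * (x^+2)^+2 * (w^+2)^+2.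
  have a1 := sqr_ge0 x; have a2 := mulr_ge0 (sqr_ge0 x) (sqr_ge0 w).
  have a3 := mulr_ge0 (sqr_ge0 (x^+2)) (sqr_ge0 w).
  have a4 := mulr_ge0 (sqr_ge0 (x^+2)) (sqr_ge0 (w^+2)).
  have -> : 32 * x ^+ 2 * w ^+ 2 = 32 * (x ^+ 2 * w ^+ 2) by ring.
  lra.
have p2 := mulr_ge0 (sqr_ge0 w) p1.
have p3 : 0 <= w * r1sq x y * e by rewrite mulr_ge0 // mulr_ge0 //; lra.
lra.
Qed.

Lemma part3 (x y : R) : regionRp (x, y) -> 0 <= omega_p x y <= 2 * `|y|.
Proof.
case=> [[/= x0 _] /= x2].
have r4 := r1sq_ge4 x y.
have r0 : 0 < 2 * r1sq x y by lra.
have hx2 : x^+2 <= 4 by rewrite expr2; nra.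
have e0 : 0 <= 4 - x^+2 by lra.
have := @sqrtD_le x y _ e0 (_ : _ = _); move/(_ ltac:(ring)) => H.
have := sqrtD_ge x y; rewrite ler0_norm ?subr_le0 // => H2.
rewrite /omega_p; apply/andP; split.
  by rewrite divr_ge0 //; lra.
by rewrite ler_pdivrMr //; lra.
Qed.

Lemma part3m (x y : R) : regionRm (x, y) -> - (2 * `|y|) <= omega_m x y <= 0.
Proof.
case=> [[/= x0 _] /= x2].
have r4 := r1sq_ge4 x y.
have r0 : 0 < 2 * r1sq x y by lra.
have hx2 : 4 <= x^+2 by rewrite expr2; nra.
have e0 : 0 <= x^+2 - 4 by lra.
have := @sqrtD_le x y _ e0 (_ : _ = _); move/(_ ltac:(ring)) => H.
have := sqrtD_ge x y; rewrite ger0_norm // => H2.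
rewrite /omega_m; apply/andP; split.
  by rewrite ler_pdivlMr //; lra.
by rewrite ler_pdivrMr //; lra.
Qed.

Lemma lw1 (x w : R) : 0 <= w -> w <= 1/10 -> -(10*w) <= x-2 <= 10*w ->
  -(50*w) <= x^+2 - 4 <= 50*w.
Proof.
move=> w0 w1 /andP[z1 z2].
have p1 : 0 <= (10*w - (x-2)) * (x+2) by apply: mulr_ge0; lra.
have p2 : 0 <= (10*w + (x-2)) * (x+2) by apply: mulr_ge0; lra.
have p3 : 0 <= w * (5 - (x+2)) by apply: mulr_ge0; lra.
have -> : x^+2 - 4 = (x-2)*(x+2) by ring.
apply/andP; split; lra.
Qed.

Lemma lw2 (x y w : R) : w = `|y| -> w <= 1/10 -> -(10*w) <= x-2 <= 10*w ->
  Num.sqrt (Delta x y) <= 67 * w.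
Proof.
move=> wy w1 hz.
have w0 : 0 <= w by rewrite wy normr_ge0.
have hy2 : y^+2 = w^+2 by rewrite wy real_normK // num_real.
have /andP[z1 z2] := hz.
have /andP[a1 a2] := @lw1 x w w0 w1 hz.
have T0 : 0 <= 67 * w by lra.
rewrite -(ger0_norm T0) -sqrtr_sqr; apply: ler_wsqrtr.
rewrite DeltaE hy2.
have hx2 : x^+2 <= 9 by rewrite expr2; nra.
have hx2' : 0 <= x^+2 := sqr_ge0 x.
have hw2 : w^+2 <= w / 10 by rewrite expr2; nra.
have q1 : (x^+2-4)^+2 <= 2500 * w^+2.
  have p1 : 0 <= (50*w - (x^+2-4)) * (50*w + (x^+2-4)) by apply: mulr_ge0; lra.
  have -> : 2500 * w^+2 = (50*w)^+2 by ring.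
  rewrite !expr2; lra.
have q2 : x^+2 * w^+2 <= 9 * w^+2.
  have : 0 <= (9 - x^+2) * w^+2 by apply: mulr_ge0; rewrite ?sqr_ge0; lra.
  lra.
have q3 : 8 * x^+2 * w^+2 * (2 * x^+2 + 8) <= 1872 * w^+2.
  have xw0 := mulr_ge0 hx2' (sqr_ge0 w).
  have : 0 <= (9 * w^+2 - x^+2 * w^+2) * (2 * x^+2 + 8) by apply: mulr_ge0; lra.
  have : 0 <= (x^+2 * w^+2) * (9 - x^+2) by apply: mulr_ge0; lra.
  have -> : 8 * x^+2 * w^+2 * (2 * x^+2 + 8) = 8 * ((x^+2 * w^+2) * (2 * x^+2 + 8)) by ring.
  lra.
have q4 : 64 * (x^+2 * w^+2)^+2 <= 65 * w^+2.
  have xw0 := mulr_ge0 hx2' (sqr_ge0 w).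
  have : (x^+2 * w^+2)^+2 <= (9 * w^+2)^+2.
    by rewrite !expr2; apply: ler_pM => //.
  have : (9 * w^+2)^+2 <= 81 * w^+2 / 100.
    have : 0 <= w^+2 * (w^+2 - w / 10 - (w^+2 - w/10)) by rewrite subrr mulr0.
    have h5 : w^+2 * w^+2 <= w^+2 * (1/100).
      apply: ler_pM; rewrite ?sqr_ge0 //; rewrite expr2; nra.
    have -> : (9 * w^+2)^+2 = 81 * (w^+2 * w^+2) by ring.
    lra.
  lra.
have -> : (67 * w)^+2 = 4489 * w^+2 by ring.
have := sqr_ge0 w; lra.
Qed.

Lemma lw4 (A B w : R) : 0 <= w -> 0 <= A -> B <= 117 * w -> 80 * w^+2 <= A * B ->
  27/100 * w <= A.
Proof.
move=> w0 A0 Bb P.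
have p : 0 <= A * (117 * w - B) by apply: mulr_ge0; lra.
rewrite leNgt; apply/negP => h.
have wp : 0 < w by lra.
have := mulr_gt0 (_ : 0 < 27/100 * w - A) wp; move/(_ ltac:(lra)).
rewrite expr2 in P; have := mulr_gt0 wp wp; lra.
Qed.

Lemma lw5 (N r w : R) : 4 <= r -> r <= 27/2 -> 0 <= w -> 27/100 * w <= `|N| ->
  1/100 * w <= `|N / (2 * r)|.
Proof.
move=> r4 r2 w0 h.
have r0 : 0 < 2 * r by lra.
rewrite normrM normfV (gtr0_norm r0) ler_pdivlMr //.
have : 0 <= w * (27/2 - r) by apply: mulr_ge0; lra.
lra.
Qed.

Lemma xbounds (x w : R) : 0 <= w -> w <= 1/10 -> -(10*w) <= x-2 <= 10*w ->
  [/\ 1 <= x^+2, x^+2 <= 9 & w^+2 <= 1/100].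
Proof.
move=> w0 w1 /andP[z1 z2].
have h1 : 0 <= (3 - x) * (3 + x) by apply: mulr_ge0; lra.
have h2 : 0 <= (x - 1) * (x + 1) by apply: mulr_ge0; lra.
have h3 : 0 <= (1/10 - w) * (1/10 + w) by apply: mulr_ge0; lra.
rewrite !expr2; split; lra.
Qed.

Lemma part4 (x y : R) : `|y| <= 1/10 -> `|x - 2| / 10 <= `|y| ->
  1/100 * `|y| <= `|omega_p x y| /\ 1/100 * `|y| <= `|omega_m x y|.
Proof.
move=> w1 hz0.
set w := `|y|.
have w0 : 0 <= w by rewrite /w normr_ge0.
have hz : -(10*w) <= x-2 <= 10*w.
  by rewrite -ler_norml; move: hz0; rewrite ler_pdivrMr // mulrC.
have hy2 : y^+2 = w^+2 by rewrite /w real_normK // num_real.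
have /andP[z1 z2] := hz.
have /andP[a1 a2] := @lw1 x w w0 w1 hz.
have sb := @lw2 x y w erefl w1 hz.
have s0 := sqrtr_ge0 (Delta x y).
have s2 := sqr_sqrtr (Delta_ge0 x y).
move: sb s0 s2; set s := Num.sqrt _ => sb s0 s2.
have r4 := r1sq_ge4 x y.
have [hx1 hx2 hw2] := @xbounds x w w0 w1 hz.
have r2 : r1sq x y <= 27/2.
  rewrite /r1sq hy2.
  have : 0 <= (9 - x^+2) * w^+2 by apply: mulr_ge0; rewrite ?sqr_ge0; lra.
  lra.
have hP : (x^+2 - 4 + s) * (x^+2 - 4 - s) =
  - (8 * x^+2 * y^+2 * (2 * x^+2 + 8) + 64 * (x^+2 * y^+2)^+2).
  have -> : (x^+2 - 4 + s) * (x^+2 - 4 - s) = (x^+2-4)^+2 - s^+2 by ring.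
  by rewrite s2 DeltaE; ring.
have P80 : 80 * w^+2 <= 8 * x^+2 * y^+2 * (2 * x^+2 + 8) + 64 * (x^+2 * y^+2)^+2.
  rewrite hy2.
  have := sqr_ge0 (x^+2 * w^+2).
  have : 0 <= (x^+2 - 1) * w^+2 by apply: mulr_ge0; rewrite ?sqr_ge0; lra.
  have : 0 <= (x^+2 - 1) * (w^+2 * x^+2) by apply: mulr_ge0; [lra | apply: mulr_ge0; exact: sqr_ge0].
  have -> : 8 * x ^+ 2 * w ^+ 2 * (2 * x ^+ 2 + 8) = 16 * (x^+2 * (w^+2 * x^+2)) + 64 * (x^+2 * w^+2) by ring.
  have := mulr_ge0 (sqr_ge0 x) (mulr_ge0 (sqr_ge0 w) (sqr_ge0 x)).
  lra.
have hAB : 80 * w^+2 <= `|x^+2 - 4 + s| * `|x^+2 - 4 - s|.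
  by rewrite -normrM hP normrN ger0_norm; [lra | have := Drest_ge0 x y; lra].
have Bp : `|x^+2 - 4 + s| <= 117 * w by rewrite ler_norml; apply/andP; split; lra.
have Bm : `|x^+2 - 4 - s| <= 117 * w by rewrite ler_norml; apply/andP; split; lra.
split; rewrite /omega_p /omega_m -/s; apply: lw5 => //.
  exact: (@lw4 _ _ w w0 (normr_ge0 _) Bm hAB).
apply: (@lw4 _ _ w w0 (normr_ge0 _) Bp); rewrite [X in _ <= X]mulrC; exact: hAB.
Qed.
End S.

Theorem lemma4p1 (R : realType) :
  (* smoothness on R \ {p0}: on some open neighbourhood of it *)
  (exists U : set (R * R),
      (@regionR R `\ @p0 R `<=` U) /\
      smooth_on U (@omega_p2 R) /\ smooth_on U (@omega_m2 R)) /\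
  (* asymptotics as (x,y) -> p0 *)
  (exists C delta : R, 0 < C /\ 0 < delta /\
     forall x y : R, 0 < x -> (x - 2) ^+ 2 + y ^+ 2 < delta ->
       `|omega_p x y - ((x - 2) + Num.sqrt ((x - 2) ^+ 2 + 32 * y ^+ 2)) / 4|
           <= C * ((x - 2) ^+ 2 + 32 * y ^+ 2) /\
       `|omega_m x y - ((x - 2) - Num.sqrt ((x - 2) ^+ 2 + 32 * y ^+ 2)) / 4|
           <= C * ((x - 2) ^+ 2 + 32 * y ^+ 2)) /\
  (* sign bounds on R_+ and R_- *)
  (forall x y : R, regionRp (x, y) -> 0 <= omega_p x y <= 2 * `|y|) /\
  (forall x y : R, regionRm (x, y) -> - (2 * `|y|) <= omega_m x y <= 0) /\
  (* lower bounds on wedges *)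
  (forall a : R, 0 < a -> a <= 1 / 10 ->
     exists C : R, 0 < C /\
       forall x y : R, wedge a (x, y) ->
         C * `|y| <= `|omega_p x y| /\ C * `|y| <= `|omega_m x y|).
Proof.
split; first exact: part1.
split.
  exists 3, (1/100); split; first lra; split; first lra.
  move=> x y x0 hd.
  have t0 : 0 <= (x - 2) ^+ 2 + 32 * y ^+ 2.
    by have := sqr_ge0 y; have := sqr_ge0 (x-2); lra.
  have := @asym R x y (Num.sqrt (Delta x y)) (Num.sqrt ((x - 2) ^+ 2 + 32 * y ^+ 2))
    x0 hd (sqrtr_ge0 _) (sqr_sqrtr (@Delta_ge0 R x y)) (sqrtr_ge0 _) (sqr_sqrtr t0).
  by rewrite (sqr_sqrtr t0).
split; first by move=> x y h; exact: part3.
split; first by move=> x y h; exact: part3m.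
move=> a a0 a1; exists (1/100); split; first lra.
move=> x y [/= h1 h2]; apply: part4 => //; lra.
Qed.
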